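(* Let $F$ be a Ferrers diagram, $T\in\mathsf{EWtab}(F)$ and $S=S(T)$. If $T_{jk}$ (with $j\in\mathsf{rows}(F)$, $k\in\mathsf{cols}(F)$, $j<k$) is a cornersupport in $T$, then there exist a row $j'\ne j$ and column $k'\ne k$ such that $S_{j'k'}$ induces $T_{jk}$ to be a cornersupport, and either (i) $(j,k),(j,k'),(j',k')$ are cells of $F$ with $T_{jk}=T_{jk'}=0$ and $T_{j'k'}=1$, or (ii) $(j,k),(j',k),(j',k')$ are cells of $F$ with $T_{jk}=T_{j'k}=1$ and $T_{j'k'}=0$.
   Context: Ferrers diagrams and graphs: a Ferrers diagram $F$ (English convention) of semiperimeter $n+1$ has rows and columns labeled by $0,\ldots,n$: the $n+1$ unit steps of its south-east boundary path, traversed from top-right to bottom-left, are labeled $0,\ldots,n$; a vertical step labels the row it bounds, a horizontal step the column it bounds (top row labeled $0$). $\mathsf{rows}(F)$, $\mathsf{cols}(F)$ are the label sets; $F$ has a cell in row $i$, column $j$ iff $i<j$. $G(F)$ has vertex set $\{0,\ldots,n\}$ with edges $\{i,j\}$ for $i\in\mathsf{rows}(F)$, $j\in\mathsf{cols}(F)$, $i<j$. Sandpile model on $G(F)$ with sink $0$: configurations $c\in\mathbb{N}^n$; non-sink $v$ unstable if $c_v\ge\deg(v)$; toppling sends one grain to each neighbour (grains to $0$ disappear); toppling the sink adds one grain to each neighbour of $0$. Canonical toppling of a recurrent configuration $c$: topple the sink ($U^{(0)}_c=\{0\}$), then alternately topple simultaneously all unstable vertices in $\mathsf{cols}(F)$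 ($V^{(1)}_c$), all unstable in $\mathsf{rows}(F)$ ($U^{(1)}_c$), etc.; $\mathsf{CanonTop}(c)=(U^{(0)}_c,V^{(1)}_c,U^{(1)}_c,\ldots)$ is an ordered partition of $\{0,\ldots,n\}$. EW-tableaux: $0/1$-fillings $T$ of $F$ ($T_{ij}$ = entry in row $i$, column $j$) with top row all 1s, a 0 in every other row, and no rectangle with 0s in two diagonally opposite corners and 1s in the other two; $\mathsf{EWtab}(F)$ is their set. $\phi_{TC}(T)$ is the (recurrent) configuration with $c_i$ = number of 1s in row $i$ ($i\in\mathsf{rows}(F)$), $c_i$ = number of 0s in column $i$ ($i\in\mathsf{cols}(F)$). $\mathsf{CanonTop}(T):=\mathsf{CanonTop}(\phi_{TC}(T))$. Supplementary tableau $S=S(T)$: the $|\mathsf{rows}(F)|\times|\mathsf{cols}(F)|$ array with $S_{ij}=1$ if row label $i$ lies in an earlier block of $\mathsf{CanonTop}(T)$ than column label $j$, else $0$ (it agrees with $T$ on cells of $F$). An entry $x$ of $T$ at $(j,k)$ is a cornersupport entry (and the cell a cornersupport) iff there exist a row $j'\ne j$ and column $k'\ne k$ with $S_{j'k'}\ne x$ and $S_{j'k}=S_{jk'}=x$; one says $S_{j'k'}$ induces $T_{jk}$ to be a cornersupport. *)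

(* Defs.v *)
From mathcomp Require Import all_boot.
Set Implicit Arguments. Unset Strict Implicit. Unset Printing Implicit Defensive.

(* A Ferrers diagram of semiperimeter n+1 is encoded by the set R of labels
   (in 'I_n.+1 = {0,...,n}) of its vertical boundary steps, i.e. rows(F) = R,
   cols(F) = complement of R.  The boundary path starts (top right) with the
   vertical step of the top row 0 and ends (bottom left) with a horizontal step. *)
Definition Ferrers (n : nat) (R : {set 'I_n.+1}) : bool :=
  (ord0 \in R) && (ord_max \notin R).

Definition cell n (R : {set 'I_n.+1}) (i j : 'I_n.+1) : bool :=
  [&& i \in R, j \notin R & i < j].

Definition adj n (R : {set 'I_n.+1}) (u v : 'I_n.+1) : bool :=
  cell R u v || cell R v u.

Definition deg n (R : {set 'I_n.+1}) (v : 'I_n.+1) : nat :=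
  #|[set u | adj R u v]|.

(* configurations: values on non-sink vertices (value at the sink 0 is
   irrelevant and ignored) *)
Definition config n := {ffun 'I_n.+1 -> nat}.

Definition topple n (R : {set 'I_n.+1}) (A : {set 'I_n.+1}) (c : config n)
  : config n :=
  [ffun v => c v - (if v \in A then deg R v else 0)
             + #|[set u in A | adj R u v]|].

Definition unstable n (R : {set 'I_n.+1}) (c : config n) (v : 'I_n.+1) : bool :=
  (v != ord0) && (deg R v <= c v).

Definition ct_select n (R : {set 'I_n.+1}) (c : config n) (k : nat)
  : {set 'I_n.+1} :=
  if odd k then [set v | (v \notin R) && unstable R c v]
  else [set v | (v \in R) && unstable R c v].

Fixpoint ct_conf n (R : {set 'I_n.+1}) (c : config n) (k : nat) : config n :=
  match k with
  | 0 => topple R [set ord0] c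
  | k'.+1 => topple R (ct_select R (ct_conf R c k') k) (ct_conf R c k')
  end.

Definition ct_block n (R : {set 'I_n.+1}) (c : config n) (k : nat)
  : {set 'I_n.+1} :=
  if k is k'.+1 then ct_select R (ct_conf R c k') k else [set ord0].

(* CanonTop(c) = (U^(0), V^(1), U^(1), ...): the sequence of nonempty blocks
   (2n+2 steps are more than enough for the process to terminate). *)
Definition CanonTop n (R : {set 'I_n.+1}) (c : config n) : seq {set 'I_n.+1} :=
  [seq B <- [seq ct_block R c k | k <- iota 0 (2 * n).+2] | B != set0].

Definition blockpos n (R : {set 'I_n.+1}) (c : config n) (v : 'I_n.+1) : nat :=
  find (fun B : {set 'I_n.+1} => v \in B) (CanonTop R c).

(* tableaux: 0/1 fillings, T i j = entry in row i column j (only the values on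
   cells of F matter) *)
Definition tableau n := 'I_n.+1 -> 'I_n.+1 -> bool.

Definition EWtab n (R : {set 'I_n.+1}) (T : tableau n) : Prop :=
  (forall j, cell R ord0 j -> T ord0 j) /\
  (forall i, i \in R -> i != ord0 -> exists j, cell R i j /\ T i j = false) /\
  (forall i1 i2 j1 j2, i1 != i2 -> j1 != j2 ->
     cell R i1 j1 -> cell R i1 j2 -> cell R i2 j1 -> cell R i2 j2 ->
     ~ [/\ T i1 j1 = false, T i2 j2 = false, T i1 j2 = true & T i2 j1 = true]).

Definition phiTC n (R : {set 'I_n.+1}) (T : tableau n) : config n :=
  [ffun v => if v == ord0 then 0
             else if v \in R then #|[set j | cell R v j & T v j]|
             else #|[set i | cell R i v & ~~ T i v]|].

Definition suppS n (R : {set 'I_n.+1}) (T : tableau n) (i j : 'I_n.+1) : bool :=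
  blockpos R (phiTC R T) i < blockpos R (phiTC R T) j.

Definition induces n (R : {set 'I_n.+1}) (T : tableau n) (j k j' k' : 'I_n.+1)
  : Prop :=
  [/\ j' \in R, k' \notin R, j' != j, k' != k &
      [/\ suppS R T j' k' != T j k, suppS R T j' k = T j k
        & suppS R T j k' = T j k]].

Definition cornersupport n (R : {set 'I_n.+1}) (T : tableau n) (j k : 'I_n.+1)
  : Prop :=
  exists j' k', induces R T j k j' k'.

(* Main.v *)
Require Import Defs.
From mathcomp Require Import all_boot zify.
Set Implicit Arguments. Unset Strict Implicit. Unset Printing Implicit Defensive.

Section Main.
Variable n : nat.
Variable R : {set 'I_n.+1}.
Variable T : tableau n.
Hypothesis HF : Ferrers R.
Hypothesis HE : EWtab R T.

Definition c0 := phiTC R T.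
Definition conf k := ct_conf R c0 k.
Definition block k := ct_block R c0 k.
Fixpoint D k : {set 'I_n.+1} :=
  if k is k'.+1 then D k' :|: block k else [set ord0].

Definition ones_c c := [set i | cell R i c & T i c].
Definition zeros_c c := [set i | cell R i c & ~~ T i c].
Definition ones_r r := [set j | cell R r j & T r j].
Definition zeros_r r := [set j | cell R r j & ~~ T r j].

Lemma card_split (P Q : pred 'I_n.+1) :
  #|[set u | P u]| = #|[set u | P u && Q u]| + #|[set u | P u && ~~ Q u]|.
Proof.
rewrite -(cardsID [set u | Q u] [set u | P u]); congr addn;
  apply: eq_card => u; rewrite !inE //; exact: andbC.
Qed.

Lemma R0 : ord0 \in R. Proof. by case/andP: HF. Qed.
Lemma Rmax : ord_max \notin R. Proof. by case/andP: HF. Qed.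

Lemma col_ne0 c : c \notin R -> c != ord0.
Proof. by apply: contraNneq => ->; exact: R0. Qed.

Lemma adj_col u c : c \notin R -> adj R u c = cell R u c.
Proof. by move=> cR; rewrite /adj {2}/cell (negbTE cR) /= orbF. Qed.

Lemma adj_row u r : r \in R -> adj R u r = cell R r u.
Proof. by move=> rR; rewrite /adj /cell rR /= andbF. Qed.

Lemma deg_col c : c \notin R -> deg R c = #|ones_c c| + #|zeros_c c|.
Proof.
move=> cR; rewrite /deg (card_split _ (fun u => T u c)).
congr addn; apply: eq_card => u; by rewrite !inE adj_col.
Qed.

Lemma deg_row r : r \in R -> deg R r = #|ones_r r| + #|zeros_r r|.
Proof.
move=> rR; rewrite /deg (card_split _ (fun u => T r u)).
congr addn; apply: eq_card => u; by rewrite !inE adj_row.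
Qed.

Lemma c0_col c : c \notin R -> c0 c = #|zeros_c c|.
Proof. by move=> cR; rewrite /c0 /phiTC ffunE (negbTE (col_ne0 cR)) (negbTE cR). Qed.

Lemma c0_row r : r \in R -> r != ord0 -> c0 r = #|ones_r r|.
Proof. by move=> rR r0; rewrite /c0 /phiTC ffunE (negbTE r0) rR. Qed.

Lemma cell0 c : c \notin R -> cell R ord0 c.
Proof.
move=> cR; rewrite /cell R0 cR /=; rewrite lt0n; exact: col_ne0.
Qed.

Lemma c0_lt_deg v : v != ord0 -> c0 v < deg R v.
Proof.
move=> v0; case: (boolP (v \in R)) => vR.
  rewrite c0_row // deg_row // -{1}(addn0 #|ones_r v|) ltn_add2l card_gt0.
  case: HE => _ [/(_ v vR v0) [j [cj Tj]] _]; apply/set0Pn; exists j.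
  by rewrite inE cj Tj.
rewrite c0_col // deg_col // -{1}(add0n #|zeros_c v|) ltn_add2r card_gt0.
apply/set0Pn; exists ord0; rewrite inE cell0 //=.
by case: HE => /(_ v (cell0 vR)) -> _.
Qed.

Definition Inv_b k := forall v, v != ord0 ->
  conf k v + (if v \in D k then deg R v else 0) =
  c0 v + #|[set u in D k | adj R u v]|.

Lemma adj_le v (A : {set 'I_n.+1}) : #|[set u in A | adj R u v]| <= deg R v.
Proof. apply: subset_leq_card; apply/subsetP=> u; rewrite !inE; by case/andP. Qed.

Lemma disj_of_b k : Inv_b k -> forall v, v \in block k.+1 -> v \notin D k.
Proof.
move=> Hb v; rewrite /block /= /ct_select.
have H : v \in [set v | unstable R (conf k) v] -> v \notin D k.
  rewrite inE => /andP [v0 Hu]; apply/negP => vD.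
  have := Hb v v0; rewrite vD.
  have := c0_lt_deg v0; have := adj_le v (D k).
  rewrite /conf in Hu *; lia.
case: ifP => _; rewrite inE => /andP [_ Hu]; apply: H; by rewrite inE.
Qed.

Lemma inv_b k : Inv_b k.
Proof.
elim: k => [|k IH] v v0.
  rewrite /conf /= ffunE inE (negbTE v0) /= subn0 addn0.
  congr addn; apply: eq_card => u; by rewrite !inE.
have Hd := disj_of_b IH.
have E1 : conf k.+1 v = conf k v - (if v \in block k.+1 then deg R v else 0)
   + #|[set u in block k.+1 | adj R u v]| by rewrite /conf /= ffunE.
have E2 : (v \in D k.+1) = (v \in D k) || (v \in block k.+1) by rewrite /= inE.
have E3 : [set u in D k.+1 | adj R u v] = [set u in D k :|: block k.+1 | adj R u v] by [].
have Hcard : #|[set u in D k :|: block k.+1 | adj R u v]| =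
   #|[set u in D k | adj R u v]| + #|[set u in block k.+1 | adj R u v]|.
  rewrite -cardsUI.
  have -> : [set u in D k | adj R u v] :&: [set u in block k.+1 | adj R u v] = set0.
    apply/setP=> u; rewrite !inE; apply/negP => /andP [/andP [uD _] /andP [uB _]].
    by move: (Hd u uB); rewrite uD.
  rewrite cards0 addn0; apply: eq_card => u; rewrite !inE; exact: andb_orl.
rewrite E1 E2 E3 Hcard.
case vB: (v \in block k.+1).
  have vD := Hd v vB.
  have Hu : deg R v <= conf k v.
    move: vB; rewrite /block /= /ct_select -/(conf k).
    by case: ifP => _; rewrite inE => /andP [_ /andP [_ ->]].
  rewrite orbT; have := IH v v0; rewrite (negbTE vD) addn0; lia.
rewrite orbF subn0; have := IH v v0; lia.
Qed.

Definition Inv_P k := forall r c, cell R r c ->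
  (c \in D k -> r \notin D k -> T r c = false) /\
  (r \in D k -> c \notin D k -> T r c = true).

Lemma card_sub_iff (A B : {set 'I_n.+1}) : (#|A| <= #|A :&: B|) = (A \subset B).
Proof.
apply/idP/idP => H.
  have /eqP E : A :&: B == A by rewrite eqEcard subsetIl H.
  by apply/setIidPl.
by rewrite (setIidPl H).
Qed.

Lemma block_spec k v : v \in block k.+1 ->
  [/\ v != ord0, (v \in R) = ~~ odd k.+1 & deg R v <= conf k v].
Proof.
change (block k.+1) with (ct_select R (conf k) k.+1); rewrite /ct_select.
case: ifP => Ho; rewrite inE => /andP [Hr /andP [v0 Hu]]; split => //.
  by rewrite (negbTE Hr).
Qed.

Lemma block_in k v : v != ord0 -> (v \in R) = ~~ odd k.+1 -> deg R v <= conf k v ->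
  v \in block k.+1.
Proof.
move=> v0 Hr Hu; change (block k.+1) with (ct_select R (conf k) k.+1); rewrite /ct_select.
case: ifP => Ho; rewrite inE Hr Ho /= /unstable v0 Hu //.
Qed.

Lemma col_unstable k c : Inv_P k -> c \notin R -> c \notin D k ->
  (deg R c <= conf k c) = (ones_c c \subset D k).
Proof.
move=> HP cR cD.
have Hb := inv_b k (col_ne0 cR); rewrite (negbTE cD) addn0 c0_col // in Hb.
have EA : [set u in D k | adj R u c] = ones_c c :&: D k.
  apply/setP=> u; rewrite !inE adj_col //.
  case uD: (u \in D k); rewrite ?andbF ?andbT //=.
  case cu: (cell R u c) => //=; by rewrite (proj2 (HP u c cu) uD cD).
rewrite Hb EA deg_col // -card_sub_iff. by rewrite addnC leq_add2l.
Qed.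

Lemma row_unstable k r : Inv_P k -> r \in R -> r != ord0 -> r \notin D k ->
  (deg R r <= conf k r) = (zeros_r r \subset D k).
Proof.
move=> HP rR r0 rD.
have Hb := inv_b k r0; rewrite (negbTE rD) addn0 c0_row // in Hb.
have EA : [set u in D k | adj R u r] = zeros_r r :&: D k.
  apply/setP=> u; rewrite !inE adj_row //.
  case uD: (u \in D k); rewrite ?andbF ?andbT //=.
  case cu: (cell R r u) => //=; by rewrite (proj1 (HP r u cu) uD rD).
by rewrite Hb EA deg_row // -card_sub_iff leq_add2l.
Qed.

Lemma cell_RR r c : cell R r c -> [/\ r \in R, c \notin R & r < c].
Proof. by case/and3P. Qed.

Lemma inv_P k : Inv_P k.
Proof.
elim: k => [|k IH] r c rc; have [rR cR rc'] := cell_RR rc.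
  split; rewrite /= inE.
    by move/eqP=> E; move: cR; rewrite E R0.
  by move/eqP=> E; subst r; case: HE => /(_ c rc) -> _.
have E v : (v \in D k.+1) = (v \in D k) || (v \in block k.+1) by rewrite /= inE.
split; rewrite !E negb_or.
  case/orP => [cD /andP [rD _] | cB /andP [rD rB]]; first exact: (proj1 (IH r c rc)).
  have [c0' _ Hu] := block_spec cB.
  have cD := disj_of_b (@inv_b k) cB.
  move: Hu; rewrite col_unstable // => /subsetP Hs.
  apply/negP => Trc; move: (Hs r); rewrite inE rc Trc => /(_ isT).
  by rewrite (negbTE rD).
case/orP => [rD /andP [cD _] | rB /andP [cD cB]]; first exact: (proj2 (IH r c rc)).
have [r0 _ Hu] := block_spec rB.
have rD := disj_of_b (@inv_b k) rB.
move: Hu; rewrite row_unstable // => /subsetP Hs.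
apply/negPn/negP => Trc; move: (Hs c); rewrite inE rc Trc => /(_ isT).
by rewrite (negbTE cD).
Qed.

Lemma extremal m : forall (U V : {set 'I_n.+1}), #|V| <= m ->
  (forall r, r \in U -> exists c, [/\ c \in V, cell R r c & T r c = false]) ->
  (forall c, c \in V -> exists r, [/\ r \in U, cell R r c & T r c = true]) ->
  V = set0.
Proof.
elim: m => [|m IH] U V HV hU hV.
  by apply: cards0_eq; lia.
case: (set_0Vmem V) => [->|[cm0 cm0V]] //.
case: (@arg_maxnP _ cm0 (mem V) (fun c => val c) cm0V) => cm cmV0 Hmax.
have cmV : cm \in V := cmV0.
have cmR : cm \notin R.
  by have [r [_ /cell_RR [] ]] := hV cm cmV.
have hcell r : r \in U -> cell R r cm.
  move=> rU; have [c [cV /cell_RR [rR cR rc] _]] := hU r rU.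
  have := Hmax c cV; rewrite /cell rR cmR /=; lia.
pose U' := [set r in U | T r cm].
pose V' := [set c in V :\ cm | [exists r, (r \in U') && cell R r c && T r c]].
have HV' : #|V'| <= m.
  have : #|V'| <= #|V :\ cm|.
    by apply: subset_leq_card; apply/subsetP => c; rewrite inE => /andP [].
  have := cardsD1 cm V; rewrite cmV; lia.
have hU' : forall r, r \in U' -> exists c, [/\ c \in V', cell R r c & T r c = false].
  move=> r; rewrite inE => /andP [rU Trm].
  have [c [cV rc Trc]] := hU r rU.
  have ccm : c != cm by apply/eqP => E; move: Trc; rewrite E Trm.
  have [r' [r'U r'c Tr'c]] := hV c cV.
  have rr' : r' != r by apply/eqP => E; move: Tr'c; rewrite E Trc.
  have Tr'm : T r' cm = true.
    case Tr'm: (T r' cm) => //.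
    case: HE => _ [_ H3].
    have cmc : cm != c by rewrite eq_sym.
    by case: (H3 r' r cm c rr' cmc (hcell r' r'U) r'c (hcell r rU) rc).
  exists c; split => //; rewrite !inE ccm cV /=.
  apply/existsP; exists r'; by rewrite inE r'U Tr'm r'c Tr'c.
have hV' : forall c, c \in V' -> exists r, [/\ r \in U', cell R r c & T r c = true].
  move=> c; rewrite inE => /andP [_ /existsP [r /andP [/andP [rU rc] Trc]]].
  by exists r; split => //; apply/idP.
have V'0 := IH U' V' HV' hU' hV'.
have [r [rU rc Trc]] := hV cm cmV.
have rU' : r \in U' by rewrite inE rU Trc.
have [c [cV' _ _]] := hU' r rU'.
by rewrite V'0 inE in cV'.
Qed.

Lemma D0k k : ord0 \in D k.
Proof. elim: k => [|k IH] /=; by rewrite !inE ?IH. Qed.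

Lemma D_mono k : D k \subset D k.+1.
Proof. by apply/subsetP => v vD; rewrite /= inE vD. Qed.

Lemma stall k : (forall v, v != ord0 -> ~~ (deg R v <= conf k v)) -> forall v, v \in D k.
Proof.
move=> Hs.
pose U := [set r | (r \in R) && (r \notin D k)].
pose V := [set c | (c \notin R) && (c \notin D k)].
have HP := inv_P k.
have hU : forall r, r \in U -> exists c, [/\ c \in V, cell R r c & T r c = false].
  move=> r; rewrite inE => /andP [rR rD].
  have r0 : r != ord0 by apply: contraNneq rD => ->; exact: D0k.
  have := Hs r r0; rewrite row_unstable // => /subsetPn [c].
  rewrite inE => /andP [rc Trc] cD; exists c; split => //.
    by rewrite inE cD andbT; case/cell_RR: rc.
  exact: negbTE.
have hV : forall c, c \in V -> exists r, [/\ r \in U, cell R r c & T r c = true].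
  move=> c; rewrite inE => /andP [cR cD].
  have := Hs c (col_ne0 cR); rewrite col_unstable // => /subsetPn [r].
  rewrite inE => /andP [rc Trc] rD; exists r; split => //.
  by rewrite inE rD andbT; case/cell_RR: rc.
have V0 := extremal (leqnn #|V|) hU hV.
move=> v; apply/negPn/negP => vD.
case vR: (v \in R).
  have vU : v \in U by rewrite inE vR vD.
  by have [c [cV _ _]] := hU v vU; rewrite V0 inE in cV.
have vV : v \in V by rewrite inE vR vD.
by rewrite V0 inE in vV.
Qed.

Lemma conf_empty k : block k.+1 = set0 -> conf k.+1 = conf k.
Proof.
move=> E; apply/ffunP => v.
have -> : conf k.+1 v = conf k v - (if v \in block k.+1 then deg R v else 0)
   + #|[set u in block k.+1 | adj R u v]| by rewrite /conf /= ffunE.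
rewrite E inE subn0.
have -> : [set u in set0 | adj R u v] = set0 by apply/setP => u; rewrite !inE.
by rewrite cards0 addn0.
Qed.

Lemma grow k : ~~ [forall v, v \in D k] -> #|D k| < #|D k.+2|.
Proof.
move=> Hn.
have Hsub : D k \subset D k.+2 := subset_trans (D_mono k) (D_mono k.+1).
case: (set_0Vmem (block k.+1)) => [E1|[v vB]]; last first.
  apply: proper_card; apply/properP; split => //; exists v.
    by rewrite /= !inE vB orbT.
  exact: disj_of_b (@inv_b k) _ vB.
case: (set_0Vmem (block k.+2)) => [E2|[v vB]]; last first.
  apply: proper_card; apply/properP; split => //; exists v.
    by rewrite /= !inE vB orbT.
  have := disj_of_b (@inv_b k.+1) vB; apply: contra => vD.
  exact: (subsetP (D_mono k)).
exfalso; move/negP: Hn; apply; apply/forallP.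
apply: stall => v v0; apply/negP => Hu.
have Hc := conf_empty E1.
case Hp: ((v \in R) == ~~ odd k.+1).
  have := block_in v0 (eqP Hp) Hu; by rewrite E1 inE.
have Hp2 : (v \in R) = ~~ odd k.+2.
  move: Hp; rewrite /= negbK; by case: (v \in R); case: (odd k).
have := block_in v0 Hp2; rewrite Hc E2 inE => /(_ Hu) //.
Qed.

Lemma allD_aux m : (forall v, v \in D (2 * m)) \/ m < #|D (2 * m)|.
Proof.
elim: m => [|m IH]; first by right; rewrite /= cards1.
have E : 2 * m.+1 = (2 * m).+2 by rewrite mulnS.
have up : forall v, v \in D (2 * m) -> v \in D (2 * m.+1).
  move=> v vD; rewrite E; apply: (subsetP (D_mono _)); exact: (subsetP (D_mono _)).
case: IH => [H|H]; first by left => v; apply: up.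
case: (boolP [forall v, v \in D (2 * m)]) => [/forallP Hall|Hn].
  by left => v; apply: up.
by right; have := grow Hn; rewrite E; lia.
Qed.

Lemma allD v : v \in D (2 * n).
Proof.
case: (allD_aux n) => [//|H].
have H2 := subset_leq_card (subsetT (D (2 * n))).
rewrite cardsT card_ord in H2.
have E : D (2 * n) = setT.
  apply/eqP; rewrite eqEcard subsetT cardsT card_ord /=.
exact: H.
by rewrite E inE.
Qed.


Definition NN := (2 * n).+2.
Definition bs := [seq block i | i <- iota 0 NN].
Definition tm v := find (fun B : {set 'I_n.+1} => v \in B) bs.

Lemma size_bs : size bs = NN.
Proof. by rewrite size_map size_iota. Qed.

Lemma nth_bs i : i < NN -> nth set0 bs i = block i.
Proof. by move=> Hi; rewrite (nth_map 0) ?size_iota // nth_iota. Qed.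

Lemma D_of_block k i v : i <= k -> v \in block i -> v \in D k.
Proof.
elim: k => [|k IH] Hi vB.
  by move: Hi; rewrite leqn0 => /eqP Ei; subst i.
rewrite /= inE; case: (ltnP i k.+1) Hi => [Hlt _|Hge Hle].
  by rewrite IH.
have Ei : i = k.+1 by apply/eqP; rewrite eqn_leq Hle Hge.
subst i.
by rewrite vB orbT.
Qed.

Lemma block_of_D k v : v \in D k -> exists2 i, i <= k & v \in block i.
Proof.
elim: k => [|k IH] /=; first by move=> vD; exists 0.
rewrite inE => /orP [/IH [i Hi vB]|vB]; first by exists i => //; apply: leqW.
by exists k.+1.
Qed.

Lemma tm_min v i : i < NN -> v \in block i -> tm v <= i.
Proof.
move=> Hi vB; rewrite leqNgt; apply/negP => Hlt.
have := before_find set0 Hlt; rewrite nth_bs // vB //.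
Qed.

Lemma tm_spec v : tm v <= 2 * n /\ v \in block (tm v).
Proof.
have [i Hi vB] := block_of_D (allD v).
have Hm := tm_min (leq_trans Hi (leqnSn _) : i < NN) vB.
split; first exact: leq_trans Hm Hi.
rewrite -nth_bs; last by rewrite /NN; lia.
apply: (@nth_find _ set0 (fun B : {set 'I_n.+1} => v \in B)).
apply/hasP; exists (block i) => //.
by apply: map_f; rewrite mem_iota /NN; lia.
Qed.

Lemma inD_tm k v : k < NN -> (v \in D k) = (tm v <= k).
Proof.
move=> Hk; apply/idP/idP.
  case/block_of_D => i Hi vB; have := tm_min (leq_ltn_trans Hi Hk) vB; lia.
by move=> Hle; apply: D_of_block Hle (proj2 (tm_spec v)).
Qed.

Lemma tm0 : tm ord0 = 0.
Proof. by apply/eqP; rewrite -leqn0; apply: tm_min => //; rewrite /block /= inE. Qed.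

Lemma tm_parity v : odd (tm v) = (v \notin R).
Proof.
have [_ vB] := tm_spec v; move: vB.
case E: (tm v) => [|t].
  by rewrite /block /= inE => /eqP ->; rewrite R0.
by case/block_spec => _ -> _; rewrite negbK.
Qed.

Lemma find_filter (X : Type) (P Q : pred X) (s : seq X) :
  (forall x, P x -> Q x) -> find P (filter Q s) = count Q (take (find P s) s).
Proof.
move=> PQ; elim: s => [|x s IH] //=.
case Px: (P x); first by rewrite (PQ x Px) /= Px.
case Qx: (Q x) => /=; by rewrite ?Px Qx IH.
Qed.

Lemma blockpos_eq v : blockpos R c0 v =
  count (fun B : {set 'I_n.+1} => B != set0) (take (tm v) bs).
Proof.
rewrite /blockpos /CanonTop /tm; apply: find_filter => B vB.
by apply/set0Pn; exists v.
Qed.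

Lemma pos_lt a b : tm a < tm b -> blockpos R c0 a < blockpos R c0 b.
Proof.
move=> Hab; rewrite !blockpos_eq.
have Hb := proj1 (tm_spec b).
have -> : tm b = tm a + (tm b - tm a) by lia.
rewrite takeD count_cat -{1}(addn0 (count _ (take (tm a) bs))) ltn_add2l.
rewrite (drop_nth set0); last by rewrite size_bs /NN; lia.
have -> : tm b - tm a = (tm b - tm a - 1).+1 by lia.
rewrite /= nth_bs; last by rewrite /NN; lia.
have Ha := proj2 (tm_spec a).
have -> : (block (tm a) != set0) by apply/set0Pn; exists a.
by [].
Qed.

Lemma suppS_tm i j : tm i != tm j -> suppS R T i j = (tm i < tm j).
Proof.
move=> Hij; rewrite /suppS -/c0.
case: (ltngtP (tm i) (tm j)) => H.
- by rewrite pos_lt.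
- by have := pos_lt H; lia.
- by move: Hij; rewrite H eqxx.
Qed.

Lemma suppS_rc i j : i \in R -> j \notin R -> suppS R T i j = (tm i < tm j).
Proof.
move=> iR jR; apply: suppS_tm; apply/eqP => E.
by have := tm_parity i; rewrite E tm_parity jR iR.
Qed.

Lemma F0 r c : cell R r c -> T r c = (tm r < tm c).
Proof.
move=> rc; have [rR cR _] := cell_RR rc.
have Hr := proj1 (tm_spec r); have Hc := proj1 (tm_spec c).
have Hne : tm r != tm c.
  by apply/eqP => E; have := tm_parity r; rewrite E tm_parity cR rR.
case: (ltngtP (tm r) (tm c)) => H.
- have [_ H2] := inv_P (tm r) rc; apply: H2.
    by rewrite inD_tm // /NN; lia.
  by rewrite inD_tm /NN; lia.
- have [H1 _] := inv_P (tm c) rc; apply: H1.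
    by rewrite inD_tm // /NN; lia.
  by rewrite inD_tm /NN; lia.
- by move: Hne; rewrite H eqxx.
Qed.

Lemma F1 c : c \notin R -> exists r, [/\ cell R r c, T r c & tm c = (tm r).+1].
Proof.
move=> cR.
have P0 : cell R ord0 c && T ord0 c.
  by rewrite cell0 //=; case: HE => /(_ c (cell0 cR)) -> _.
case: (@arg_maxnP _ ord0 (fun r => cell R r c && T r c) tm P0) => r /andP [rc Trc] Hmax.
exists r; split => //.
have [rR _ _] := cell_RR rc.
have Hlt : tm r < tm c by rewrite -F0.
have Hc := proj1 (tm_spec c).
have HK : tm r < NN by rewrite /NN; lia.
have cD : c \notin D (tm r) by rewrite inD_tm // -ltnNge.
have Hsub : ones_c c \subset D (tm r).
  apply/subsetP => u; rewrite inE => /andP [uc Tuc].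
  by rewrite inD_tm //; apply: Hmax; rewrite uc Tuc.
have Hu : deg R c <= conf (tm r) c by rewrite (col_unstable (@inv_P _) cR cD).
have Hp : (c \in R) = ~~ odd (tm r).+1.
  by rewrite (negbTE cR) /= negbK tm_parity rR.
have := tm_min (_ : (tm r).+1 < NN) (block_in (col_ne0 cR) Hp Hu).
rewrite /NN; lia.
Qed.

Lemma tm_neq r c : r \in R -> c \notin R -> tm r != tm c.
Proof. by move=> rR cR; apply/eqP => E; have := tm_parity r; rewrite E tm_parity cR rR. Qed.

Lemma F2 r : r \in R -> r != ord0 -> exists c, [/\ cell R r c, T r c = false & tm r = (tm c).+1].
Proof.
move=> rR r0.
have [c1 [c1c Tc1]] : exists c, cell R r c /\ T r c = false.
  by case: HE => _ [/(_ r rR r0) H _].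
have P0 : cell R r c1 && ~~ T r c1 by rewrite c1c Tc1.
case: (@arg_maxnP _ c1 (fun c => cell R r c && ~~ T r c) tm P0) => c /andP [rc nTrc] Hmax.
exists c; split => //; first exact: negbTE.
have [_ cR _] := cell_RR rc.
have Hne := tm_neq rR cR.
have Hle : ~~ (tm r < tm c) by rewrite -F0.
have Hlt : tm c < tm r by rewrite -leqNgt in Hle; lia.
have Hr := proj1 (tm_spec r).
have HK : tm c < NN by rewrite /NN; lia.
have rD : r \notin D (tm c) by rewrite inD_tm // -ltnNge.
have Hsub : zeros_r r \subset D (tm c).
  apply/subsetP => u; rewrite inE => /andP [ru Tru].
  by rewrite inD_tm //; apply: Hmax; rewrite ru Tru.
have Hu : deg R r <= conf (tm c) r by rewrite (row_unstable (@inv_P _) rR r0 rD).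
have Hp : (r \in R) = ~~ odd (tm c).+1.
  by rewrite rR /= negbK tm_parity cR.
have := tm_min (_ : (tm c).+1 < NN) (block_in r0 Hp Hu).
rewrite /NN; lia.
Qed.

Lemma main_sec j k : cell R j k -> cornersupport R T j k ->
  exists j' k', induces R T j k j' k' /\
    ((cell R j k' /\ cell R j' k' /\
      T j k = false /\ T j k' = false /\ T j' k' = true) \/
     (cell R j' k /\ cell R j' k' /\
      T j k = true /\ T j' k = true /\ T j' k' = false)).
Proof.
move=> jk [j' [k' [j'R k'R j'j k'k [H1 H2 H3]]]].
have [jR kR _] := cell_RR jk.
rewrite !suppS_rc // in H1 H2 H3.
have n1 := tm_neq j'R k'R; have n2 := tm_neq j'R kR; have n3 := tm_neq jR k'R.
have n4 := tm_neq jR kR.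
case Tjk: (T j k); rewrite Tjk in H1 H2 H3.
- rewrite eqb_id -leqNgt in H1.
  have [r [rk Trk Er]] := F1 kR.
  have [rR _ _] := cell_RR rk.
  have r0 : r != ord0.
    apply/eqP => E; have E' : tm r = 0 by rewrite E tm0.
    move: n1 n2 n3 n4 H1 H2 H3 Er E'; clear; lia.
  have [c [rc Trc Ec]] := F2 rR r0.
  have [_ cR _] := cell_RR rc.
  exists r, c; split; last by right.
  split => //.
  + apply/eqP => E; have E' : tm r = tm j by rewrite E.
    move: n1 n2 n3 n4 H1 H2 H3 Er Ec E'; clear; lia.
  + apply/eqP => E; have E' : tm c = tm k by rewrite E.
    move: n1 n2 n3 n4 H1 H2 H3 Er Ec E'; clear; lia.
  + rewrite !suppS_rc // Tjk; split.
    * rewrite eqb_id -leqNgt; move: n1 n2 n3 n4 H1 H2 H3 Er Ec; clear; lia.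
    * move: n1 n2 n3 n4 H1 H2 H3 Er Ec; clear; lia.
    * move: n1 n2 n3 n4 H1 H2 H3 Er Ec; clear; lia.
- move/negbT: H2; rewrite -leqNgt => H2.
  move/negbT: H3; rewrite -leqNgt => H3.
  rewrite eqbF_neg negbK in H1.
  have j0 : j != ord0.
    apply/eqP => E; have E' : tm j = 0 by rewrite E tm0.
    move: n1 n2 n3 n4 H1 H2 H3 E'; clear; lia.
  have [c [jc Tjc Ec]] := F2 jR j0.
  have [_ cR _] := cell_RR jc.
  have [r [rc Trc Er]] := F1 cR.
  have [rR _ _] := cell_RR rc.
  exists r, c; split; last by left.
  split => //.
  + apply/eqP => E; have E' : tm r = tm j by rewrite E.
    move: n1 n2 n3 n4 H1 H2 H3 Er Ec E'; clear; lia.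
  + apply/eqP => E; have E' : tm c = tm k by rewrite E.
    move: n1 n2 n3 n4 H1 H2 H3 Er Ec E'; clear; lia.
  + rewrite !suppS_rc // Tjk; split.
    * rewrite eqbF_neg negbK; move: n1 n2 n3 n4 H1 H2 H3 Er Ec; clear; lia.
    * apply/negbTE; rewrite -leqNgt; move: n1 n2 n3 n4 H1 H2 H3 Er Ec; clear; lia.
    * apply/negbTE; rewrite -leqNgt; move: n1 n2 n3 n4 H1 H2 H3 Er Ec; clear; lia.
Qed.
End Main.

Theorem lemma4p17 (n : nat) (R : {set 'I_n.+1}) (T : tableau n)
  (j k : 'I_n.+1) :
  Ferrers R -> EWtab R T -> cell R j k -> cornersupport R T j k ->
  exists j' k', induces R T j k j' k' /\
    ((cell R j k' /\ cell R j' k' /\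
      T j k = false /\ T j k' = false /\ T j' k' = true) \/
     (cell R j' k /\ cell R j' k' /\
      T j k = true /\ T j' k = true /\ T j' k' = false)).
Proof. move=> HF HE; exact: main_sec. Qed.
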